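(* In the two-SP bandwidth game with minimum small-cell bandwidth constraints $B_{i,S}\ge B_{i,S}^0$ (described in the context), there exists a unique pure-strategy Nash equilibrium $(B_{1,S}^*,B_{2,S}^* )$. Moreover, the total small-cell bandwidth at this equilibrium is no less than that at the unconstrained equilibrium: $$B_{1,S}^*+B_{2,S}^*\ \ge\ B_{1,S}^{\mathrm{free}}+B_{2,S}^{\mathrm{free}}=\frac{\epsilon N_f(B_1+B_2)}{\epsilon N_f+N_m}.$$
   Context: Fixed parameters: $\alpha\in(0,1)$; densities $N_m>0$ (mobile users) and $N_f>0$ (fixed users); spectral efficiency $R_0>0$; common small-cell density $\lambda_S>1$ (macro density normalized to 1); total bandwidths $B_1,B_2>0$; regulatory lower bounds $B_{i,S}^0\in[0,B_i]$. Utility $u(r)=\frac{r^{1-\alpha}}{1-\alpha}$, $u'(r)=r^{-\alpha}$. Let $\epsilon=\lambda_S^{1/\alpha-1}$. Two-SP bandwidth game: SP $i\in\{1,2\}$ chooses small-cell bandwidth $B_{i,S}\in[B_{i,S}^0,B_i]$ and sets $B_{i,M}=B_i-B_{i,S}$. Given a profile, prices are market-clearing, mobile users use macro-cells and fixed users use small-cells, so the average rates are $R_S=\frac{\lambda_S(B_{1,S}+B_{2,S})R_0}{N_f}$ and $R_M=\frac{(B_{1,M}+B_{2,M})R_0}{N_m}$, and SP $i$'s payoff (revenue) is $S_i=R_0B_{i,M}R_M^{-\alpha}+R_0\lambda_SB_{i,S}R_S^{-\alpha}$ (a term with zero bandwidth is $0$). Define $B_{i,S}^{\mathrm{free}}=\frac{\epsilon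 N_fB_i}{\epsilon N_f+N_m}$, the equilibrium small-cell bandwidth of SP $i$ when there are no constraints ($B_{i,S}^0=0$). *)

(* Defs.v *)
From Stdlib Require Import Reals.
Open Scope R_scope.

Definition rpow_neg (alpha r : R) : R := Rpower r (- alpha).

(* A revenue term  c * B * R^(-alpha); it is 0 when the bandwidth B is 0
   (we guard on B <= 0, which for feasible profiles means B = 0). *)
Definition rev_term (alpha c B Rt : R) : R :=
  if Rle_dec B 0 then 0 else c * B * rpow_neg alpha Rt.

Definition RS (lamS R0 Nf b1 b2 : R) : R := lamS * (b1 + b2) * R0 / Nf.
Definition RM (R0 Nm B1 B2 b1 b2 : R) : R := ((B1 - b1) + (B2 - b2)) * R0 / Nm.

Definition payoff (alpha Nm Nf R0 lamS B1 B2 Bi bi b1 b2 : R) : R :=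
  rev_term alpha R0 (Bi - bi) (RM R0 Nm B1 B2 b1 b2)
  + rev_term alpha (R0 * lamS) bi (RS lamS R0 Nf b1 b2).

Definition S1 (alpha Nm Nf R0 lamS B1 B2 b1 b2 : R) : R :=
  payoff alpha Nm Nf R0 lamS B1 B2 B1 b1 b1 b2.
Definition S2 (alpha Nm Nf R0 lamS B1 B2 b1 b2 : R) : R :=
  payoff alpha Nm Nf R0 lamS B1 B2 B2 b2 b1 b2.

Definition is_NE (alpha Nm Nf R0 lamS B1 B2 B10 B20 b1 b2 : R) : Prop :=
  B10 <= b1 <= B1 /\ B20 <= b2 <= B2 /\
  (forall b1', B10 <= b1' <= B1 ->
     S1 alpha Nm Nf R0 lamS B1 B2 b1' b2 <= S1 alpha Nm Nf R0 lamS B1 B2 b1 b2) /\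
  (forall b2', B20 <= b2' <= B2 ->
     S2 alpha Nm Nf R0 lamS B1 B2 b1 b2' <= S2 alpha Nm Nf R0 lamS B1 B2 b1 b2).

Definition eps (alpha lamS : R) : R := Rpower lamS (1 / alpha - 1).

Definition Bfree (alpha Nm Nf lamS Bi : R) : R :=
  eps alpha lamS * Nf * Bi / (eps alpha lamS * Nf + Nm).

(* Main.v *)
Require Import Defs.
From Stdlib Require Import Reals Lra Psatz.
From Coquelicot Require Import Coquelicot.
Open Scope R_scope.

Lemma Rpower_pos' x y : 0 < Rpower x y.
Proof. unfold Rpower; apply exp_pos. Qed.

Lemma Rpower_neg_decr a b c : 0 < c -> 0 < a < b -> Rpower b (-c) < Rpower a (-c).
Proof.
  intros Hc Hab. rewrite !Rpower_Ropp. apply Rinv_lt_contravar.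
  - apply Rmult_lt_0_compat; apply Rpower_pos'.
  - apply Rlt_Rpower_l; lra.
Qed.

Lemma div_le_cross a b c d : 0 < b -> 0 < d -> a * d <= c * b -> a / b <= c / d.
Proof.
  intros Hb Hd H.
  replace (a / b) with ((a * d) * / (b * d)) by (field; lra).
  replace (c / d) with ((c * b) * / (b * d)) by (field; lra).
  apply Rmult_le_compat_r; [|exact H].
  left; apply Rinv_0_lt_compat; nra.
Qed.

Lemma div_lt_cross a b c d : 0 < b -> 0 < d -> a * d < c * b -> a / b < c / d.
Proof.
  intros Hb Hd H.
  replace (a / b) with ((a * d) * / (b * d)) by (field; lra).
  replace (c / d) with ((c * b) * / (b * d)) by (field; lra).
  apply Rmult_lt_compat_r; [|exact H].
  apply Rinv_0_lt_compat; nra.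
Qed.

Section Game.
Variables al Nm Nf R0 lam : R.
Hypothesis Hal : 0 < al < 1.
Hypothesis HNm : 0 < Nm.
Hypothesis HNf : 0 < Nf.
Hypothesis HR0 : 0 < R0.
Hypothesis Hlam : 1 < lam.

Definition Pm z := Rpower (z * R0 / Nm) (- al).
Definition Qs x := Rpower (lam * x * R0 / Nf) (- al).
Definition rho B x := lam * Qs x / Pm (B - x).
Definition Ep Bi Bj bi bj :=
  rho (Bi + Bj) (bi + bj) * (1 - al * bi / (bi + bj)) - 1
  + al * (Bi - bi) / ((Bi - bi) + (Bj - bj)).
Definition phi Bi Bj bj t :=
  R0 * (Bi - t) * Pm ((Bi - t) + (Bj - bj)) + R0 * lam * t * Qs (t + bj).

Lemma rev_term_eq c B Rt : 0 <= B -> rev_term al c B Rt = c * B * Rpower Rt (- al).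
Proof.
  intros HB. unfold rev_term, rpow_neg. destruct (Rle_dec B 0).
  - replace B with 0 by lra. ring.
  - reflexivity.
Qed.

Lemma S1_phi B1 B2 b1 b2 : 0 <= b1 <= B1 ->
  S1 al Nm Nf R0 lam B1 B2 b1 b2 = phi B1 B2 b2 b1.
Proof.
  intros H. unfold S1, payoff, phi, Pm, Qs, RM, RS.
  rewrite !rev_term_eq by lra. reflexivity.
Qed.

Lemma S2_phi B1 B2 b1 b2 : 0 <= b2 <= B2 ->
  S2 al Nm Nf R0 lam B1 B2 b1 b2 = phi B2 B1 b1 b2.
Proof.
  intros H. unfold S2, payoff, phi, Pm, Qs, RM, RS.
  rewrite !rev_term_eq by lra.
  replace (B1 - b1 + (B2 - b2)) with (B2 - b2 + (B1 - b1)) by ring.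
  replace (b1 + b2) with (b2 + b1) by ring. reflexivity.
Qed.

Lemma Pm_pos z : 0 < Pm z.
Proof. apply Rpower_pos'. Qed.
Lemma Qs_pos z : 0 < Qs z.
Proof. apply Rpower_pos'. Qed.
Lemma rho_pos B x : 0 < rho B x.
Proof.
  unfold rho. pose proof (Pm_pos (B - x)). pose proof (Qs_pos x).
  apply Rdiv_lt_0_compat; nra.
Qed.

Lemma rho_decr B x y : 0 < x -> x < y -> y < B -> rho B y < rho B x.
Proof.
  intros Hx Hxy HyB. unfold rho, Pm, Qs.
  assert (H1 : Rpower (lam * y * R0 / Nf) (- al) < Rpower (lam * x * R0 / Nf) (- al)).
  { apply Rpower_neg_decr; [lra|]. split.
    - apply Rdiv_lt_0_compat; [|lra]. apply Rmult_lt_0_compat; nra.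
    - apply Rmult_lt_compat_r; [apply Rinv_0_lt_compat; lra|].
      apply Rmult_lt_compat_r; [lra|]. nra. }
  assert (H2 : Rpower ((B - x) * R0 / Nm) (- al) < Rpower ((B - y) * R0 / Nm) (- al)).
  { apply Rpower_neg_decr; [lra|]. split.
    - apply Rdiv_lt_0_compat; [|lra]. nra.
    - apply Rmult_lt_compat_r; [apply Rinv_0_lt_compat; lra|]. nra. }
  pose proof (Rpower_pos' (lam * y * R0 / Nf) (-al)).
  pose proof (Rpower_pos' ((B - x) * R0 / Nm) (-al)).
  pose proof (Rpower_pos' (lam * x * R0 / Nf) (-al)).
  pose proof (Rpower_pos' ((B - y) * R0 / Nm) (-al)).
  apply div_lt_cross; try lra.
  set (a := Rpower (lam * y * R0 / Nf) (- al)) in *.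
  set (b := Rpower (lam * x * R0 / Nf) (- al)) in *.
  set (c := Rpower ((B - x) * R0 / Nm) (- al)) in *.
  set (d := Rpower ((B - y) * R0 / Nm) (- al)) in *.
  assert (a * c < b * d) by nra.
  nra.
Qed.


Lemma Ep_cmp Bi Bj pi pj qi qj : 0 < Bi -> 0 < Bj -> 0 <= pi -> qi <= Bi ->
  0 <= qj -> pj <= Bj -> 0 < pi + pj -> pi + pj <= qi + qj -> qi + qj < Bi + Bj ->
  pi < qi -> qj <= pj -> Ep Bi Bj qi qj < Ep Bi Bj pi pj.
Proof.
  intros HBi HBj Hpi Hqi Hqj Hpj Hx Hxy HyB Hi Hj.
  unfold Ep.
  set (x := pi + pj) in *. set (y := qi + qj) in *.
  assert (Ha : al * pi / x <= al * qi / y).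
  { apply div_le_cross; try lra. unfold x, y in *.
    assert (pi * qj <= qi * pj) by nra. assert (0 <= al) by lra. nra. }
  assert (Ha1 : al * qi / y <= al).
  { replace al with (al * y / y) at 2 by (field; lra).
    apply Rmult_le_compat_r; [left; apply Rinv_0_lt_compat; lra|]. unfold y. nra. }
  assert (Hm : al * (Bi - qi) / (Bi - qi + (Bj - qj)) <= al * (Bi - pi) / (Bi - pi + (Bj - pj))).
  { apply div_le_cross.
    - unfold y in HyB. lra.
    - unfold x, y in *. lra.
    - unfold x, y in *. assert (0 <= al) by lra. 
      assert ((Bi - qi) * (Bj - pj) <= (Bi - pi) * (Bj - qj)) by nra.
      nra. }
  assert (Hr : rho (Bi + Bj) y * (1 - al * qi / y) < rho (Bi + Bj) x * (1 - al * pi / x)).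
  { pose proof (rho_pos (Bi + Bj) y). pose proof (rho_pos (Bi + Bj) x).
    destruct (Rle_lt_or_eq_dec _ _ Hxy) as [Hlt|Heq].
    - pose proof (rho_decr (Bi+Bj) x y Hx Hlt HyB). nra.
    - rewrite <- Heq.
      assert (al * pi / x < al * qi / x).
      { apply Rmult_lt_compat_r; [apply Rinv_0_lt_compat; lra|]. nra. }
      nra. }
  lra.
Qed.

Lemma Ep_sum Bi Bj bi bj : 0 < bi + bj < Bi + Bj ->
  Ep Bi Bj bi bj + Ep Bj Bi bj bi = (2 - al) * (rho (Bi + Bj) (bi + bj) - 1).
Proof.
  intros H. unfold Ep.
  replace (Bj + Bi) with (Bi + Bj) by ring. replace (bj + bi) with (bi + bj) by ring.
  field. lra.
Qed.


Definition xf B := eps al lam * Nf * B / (eps al lam * Nf + Nm).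

Lemma eps_pos : 0 < eps al lam.
Proof. apply Rpower_pos'. Qed.

Lemma xf_bounds B : 0 < B -> 0 < xf B < B.
Proof.
  intros HB. pose proof eps_pos. unfold xf. split.
  - apply Rdiv_lt_0_compat; [|nra]. apply Rmult_lt_0_compat; nra.
  - apply Rmult_lt_reg_r with (eps al lam * Nf + Nm); [nra|].
    unfold Rdiv. rewrite Rmult_assoc, Rinv_l by nra. nra.
Qed.

Lemma rho_xf B : 0 < B -> rho B (xf B) = 1.
Proof.
  intros HB. pose proof eps_pos. unfold rho, Pm, Qs, xf.
  set (e := eps al lam) in *. set (D := e * Nf + Nm).
  assert (HD : 0 < D) by (unfold D; nra).
  replace (lam * (e * Nf * B / D) * R0 / Nf) with ((lam * e) * (B * R0 / D)) by (field; lra).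
  replace ((B - e * Nf * B / D) * R0 / Nm) with (B * R0 / D) by (unfold D in *; field; split; nra).
  assert (Hk : 0 < B * R0 / D) by (apply Rdiv_lt_0_compat; nra).
  rewrite <- Rpower_mult_distr by nra.
  assert (Hle : lam * e = Rpower lam (1 / al)).
  { unfold e, eps. replace (1 / al) with (1 + (1 / al - 1)) at 2 by ring.
    rewrite Rpower_plus, Rpower_1 by lra. reflexivity. }
  rewrite Hle, Rpower_mult.
  replace (1 / al * - al) with (- (1)) by (field; lra).
  rewrite Rpower_Ropp, Rpower_1 by lra.
  pose proof (Rpower_pos' (B * R0 / D) (-al)). field. lra.
Qed.

Lemma rho_gt1 B x : 0 < B -> 0 < x < xf B -> 1 < rho B x.
Proof.
  intros HB Hx. pose proof (xf_bounds B HB). rewrite <- (rho_xf B HB).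
  apply rho_decr; lra.
Qed.

Lemma rho_lt1 B x : 0 < B -> xf B < x < B -> rho B x < 1.
Proof.
  intros HB Hx. pose proof (xf_bounds B HB). rewrite <- (rho_xf B HB).
  apply rho_decr; lra.
Qed.

Lemma rho_alt B x : 0 < x < B ->
  rho B x = lam * Rpower ((B - x) * R0 / Nm) al / Rpower (lam * x * R0 / Nf) al.
Proof.
  intros H. unfold rho, Pm, Qs. rewrite !Rpower_Ropp.
  pose proof (Rpower_pos' ((B - x) * R0 / Nm) al).
  pose proof (Rpower_pos' (lam * x * R0 / Nf) al).
  field. split; lra.
Qed.

Lemma Rpower_root v : 0 < v -> Rpower (Rpower v (1 / al)) al = v.
Proof.
  intros Hv. rewrite Rpower_mult. replace (1 / al * al) with 1 by (field; lra).
  apply Rpower_1; lra.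
Qed.

Lemma rho_big B K M : 0 < B -> 0 < K -> 0 < M ->
  exists x, 0 < x /\ x <= M /\ x <= B / 2 /\ K <= rho B x.
Proof.
  intros HB HK HM.
  set (c1 := Rpower (B / 2 * R0 / Nm) al).
  assert (Hc1 : 0 < c1) by apply Rpower_pos'.
  set (v := lam * c1 / K).
  assert (Hv : 0 < v) by (unfold v; apply Rdiv_lt_0_compat; nra).
  set (x0 := Nf * Rpower v (1 / al) / (lam * R0)).
  assert (Hx0 : 0 < x0).
  { unfold x0. apply Rdiv_lt_0_compat; [|nra]. pose proof (Rpower_pos' v (1/al)). nra. }
  set (x := Rmin x0 (Rmin M (B / 2))).
  assert (Hxpos : 0 < x).
  { unfold x. apply Rmin_glb_lt; [lra|]. apply Rmin_glb_lt; lra. }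
  assert (HxM : x <= M) by (unfold x; eapply Rle_trans; [apply Rmin_r|apply Rmin_l]).
  assert (HxB : x <= B / 2) by (unfold x; eapply Rle_trans; [apply Rmin_r|apply Rmin_r]).
  assert (Hxx0 : x <= x0) by (unfold x; apply Rmin_l).
  exists x. repeat split; try lra.
  rewrite rho_alt by lra.
  assert (HA : c1 <= Rpower ((B - x) * R0 / Nm) al).
  { apply Rle_Rpower_l; [lra|]. split.
    - apply Rdiv_lt_0_compat; nra.
    - apply Rmult_le_compat_r; [left; apply Rinv_0_lt_compat; lra|]. nra. }
  assert (HBd : Rpower (lam * x * R0 / Nf) al <= v).
  { rewrite <- (Rpower_root v Hv). apply Rle_Rpower_l; [lra|]. split.
    - apply Rdiv_lt_0_compat; [|lra]. apply Rmult_lt_0_compat; nra.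
    - replace (Rpower v (1 / al)) with (lam * x0 * R0 / Nf) by (unfold x0; field; lra).
      apply Rmult_le_compat_r; [left; apply Rinv_0_lt_compat; lra|].
      apply Rmult_le_compat_r; [lra|]. nra. }
  pose proof (Rpower_pos' (lam * x * R0 / Nf) al).
  apply Rle_trans with (lam * c1 / v).
  - unfold v. right. field. split; lra.
  - apply div_le_cross; try lra. 
    assert (0 <= lam * c1) by nra.
    apply Rle_trans with (lam * Rpower ((B - x) * R0 / Nm) al * Rpower (lam * x * R0 / Nf) al).
    + apply Rmult_le_compat; nra.
    + apply Rmult_le_compat_l; [|lra]. pose proof (Rpower_pos' ((B - x) * R0 / Nm) al). nra.
Qed.

Lemma rho_small B K M : 0 < B -> 0 < K -> 0 < M ->
  exists x, B - M <= x /\ B / 2 <= x /\ x < B /\ rho B x <= K.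
Proof.
  intros HB HK HM.
  set (c2 := Rpower (lam * (B / 2) * R0 / Nf) al).
  assert (Hc2 : 0 < c2) by apply Rpower_pos'.
  set (v := K * c2 / lam).
  assert (Hv : 0 < v) by (unfold v; apply Rdiv_lt_0_compat; nra).
  set (z0 := Nm * Rpower v (1 / al) / R0).
  assert (Hz0 : 0 < z0).
  { unfold z0. apply Rdiv_lt_0_compat; [|nra]. pose proof (Rpower_pos' v (1/al)). nra. }
  set (z := Rmin z0 (Rmin M (B / 2))).
  assert (Hzpos : 0 < z).
  { unfold z. apply Rmin_glb_lt; [lra|]. apply Rmin_glb_lt; lra. }
  assert (HzM : z <= M) by (unfold z; eapply Rle_trans; [apply Rmin_r|apply Rmin_l]).
  assert (HzB : z <= B / 2) by (unfold z; eapply Rle_trans; [apply Rmin_r|apply Rmin_r]).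
  assert (Hzz0 : z <= z0) by (unfold z; apply Rmin_l).
  exists (B - z). repeat split; try lra.
  rewrite rho_alt by lra.
  replace (B - (B - z)) with z by ring.
  assert (HA : c2 <= Rpower (lam * (B - z) * R0 / Nf) al).
  { apply Rle_Rpower_l; [lra|]. split.
    - apply Rdiv_lt_0_compat; [|lra]. apply Rmult_lt_0_compat; nra.
    - apply Rmult_le_compat_r; [left; apply Rinv_0_lt_compat; lra|].
      apply Rmult_le_compat_r; [lra|]. nra. }
  assert (HBd : Rpower (z * R0 / Nm) al <= v).
  { rewrite <- (Rpower_root v Hv). apply Rle_Rpower_l; [lra|]. split.
    - apply Rdiv_lt_0_compat; nra.
    - replace (Rpower v (1 / al)) with (z0 * R0 / Nm) by (unfold z0; field; lra).
      apply Rmult_le_compat_r; [left; apply Rinv_0_lt_compat; lra|]. nra. }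
  pose proof (Rpower_pos' (lam * (B - z) * R0 / Nf) al).
  pose proof (Rpower_pos' (z * R0 / Nm) al).
  apply Rle_trans with (lam * v / c2).
  - apply div_le_cross; try lra.
    assert (lam * Rpower (z * R0 / Nm) al <= lam * v) by nra.
    assert (0 <= lam * v) by nra.
    apply Rle_trans with (lam * v * c2); nra.
  - unfold v. right. field. split; lra.
Qed.


Lemma phi_derive Bi Bj bj t : 0 <= bj <= Bj -> 0 < t < Bi ->
  is_derive (phi Bi Bj bj) t
    (R0 * Pm ((Bi - t) + (Bj - bj)) * Ep Bi Bj t bj).
Proof.
  intros Hb Ht. unfold phi, Ep, rho.
  replace (Bi + Bj - (t + bj)) with ((Bi - t) + (Bj - bj)) by ring.
  unfold Pm, Qs, Rpower. auto_derive.
  - split; [|split; [|exact I]].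
    + apply Rmult_lt_0_compat; [|apply Rinv_0_lt_compat; lra].
      apply Rmult_lt_0_compat; lra.
    + apply Rmult_lt_0_compat; [|apply Rinv_0_lt_compat; lra].
      apply Rmult_lt_0_compat; [|lra]. apply Rmult_lt_0_compat; lra.
  - unfold Rminus, Rdiv.
    set (P := exp (- al * ln ((Bi + - t + (Bj + - bj)) * R0 * / Nm))).
    set (Q := exp (- al * ln (lam * (t + bj) * R0 * / Nf))).
    assert (0 < P) by apply exp_pos.
    field. repeat split; try lra.
Qed.

Lemma ln_nonpos y : y <= 0 -> ln y = 0.
Proof. intros H. unfold ln. destruct (Rlt_dec 0 y); [exfalso; lra|reflexivity]. Qed.

Lemma K_cont c : 0 < c -> continuity_pt (fun a => a * Rpower (a * c) (- al)) 0.
Proof.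
  intros Hc. unfold continuity_pt, continue_in, limit1_in, limit_in. intros eps Heps.
  set (w := eps / Rpower c (- al)).
  assert (Hw : 0 < w) by (unfold w; apply Rdiv_lt_0_compat; [lra|apply Rpower_pos']).
  exists (Rmin eps (Rpower w (1 / (1 - al)))). split.
  - apply Rmin_glb_lt; [lra|apply Rpower_pos'].
  - intros x [_ Hx]. simpl in *. unfold R_dist in *.
    rewrite Rmult_0_l, Rminus_0_r. rewrite Rminus_0_r in Hx.
    assert (Hx1 : Rabs x < eps) by (eapply Rlt_le_trans; [exact Hx|apply Rmin_l]).
    assert (Hx2 : Rabs x < Rpower w (1 / (1 - al))) by (eapply Rlt_le_trans; [exact Hx|apply Rmin_r]).
    destruct (Rle_dec x 0) as [Hle|Hgt].
    + unfold Rpower at 1. rewrite ln_nonpos by nra. rewrite Rmult_0_r, exp_0, Rmult_1_r. exact Hx1.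
    + assert (Hxp : 0 < x) by lra.
      rewrite Rabs_pos_eq in Hx2 by lra.
      rewrite <- Rpower_mult_distr by lra.
      replace (x * (Rpower x (- al) * Rpower c (- al))) with
        (Rpower x 1 * Rpower x (- al) * Rpower c (- al)) by (rewrite Rpower_1 by lra; ring).
      rewrite <- Rpower_plus.
      assert (H1 : Rpower x (1 + - al) < w).
      { replace w with (Rpower (Rpower w (1 / (1 - al))) (1 + - al)).
        - apply Rlt_Rpower_l; [lra|]. split; lra.
        - rewrite Rpower_mult. replace (1 / (1 - al) * (1 + - al)) with 1 by (field; lra).
          apply Rpower_1; lra. }
      pose proof (Rpower_pos' x (1 + - al)). pose proof (Rpower_pos' c (- al)).
      rewrite Rabs_pos_eq by nra.
      replace eps with (w * Rpower c (- al)) by (unfold w; field; lra).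
      apply Rmult_lt_compat_r; lra.
Qed.


Lemma ex_derive_cpt f x : ex_derive f x -> continuity_pt f x.
Proof. intros H. apply continuity_pt_filterlim. exact (ex_derive_continuous f x H). Qed.

Lemma cpt_scal k h x : continuity_pt h x -> continuity_pt (fun s => k * h s) x.
Proof.
  intros H. apply continuity_pt_ext with (f := mult_fct (fct_cte k) h).
  - intro; reflexivity.
  - apply continuity_pt_mult; [|exact H]. apply continuity_pt_const. intros a b; reflexivity.
Qed.

Lemma K_cont_comp c g x0 : 0 < c -> continuity_pt g x0 -> g x0 = 0 ->
  continuity_pt (fun s => g s * Rpower (g s * c) (- al)) x0.
Proof.
  intros Hc Hg H0.
  apply continuity_pt_ext with (f := comp (fun a => a * Rpower (a * c) (- al)) g).
  - intro; reflexivity.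
  - apply continuity_pt_comp; [exact Hg|]. rewrite H0. apply K_cont; exact Hc.
Qed.

Lemma phi_cont Bi Bj bj t : 0 < Bi -> 0 <= bj <= Bj -> 0 <= t <= Bi ->
  continuity_pt (phi Bi Bj bj) t.
Proof.
  intros HBi Hb Ht. unfold phi.
  apply continuity_pt_ext with
    (f := plus_fct (fun s => R0 * (Bi - s) * Pm (Bi - s + (Bj - bj)))
                   (fun s => R0 * lam * s * Qs (s + bj))).
  { intro; reflexivity. }
  apply continuity_pt_plus.
  - destruct (Rlt_dec 0 (Bi - t + (Bj - bj))) as [Hp|Hn].
    + apply ex_derive_cpt. unfold Pm, Rpower. auto_derive.
      repeat split; try exact I; repeat apply Rmult_lt_0_compat; try apply Rinv_0_lt_compat; lra.
    + assert (Htb : t = Bi) by lra. assert (Hbb : bj = Bj) by lra. subst t bj.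
      apply continuity_pt_ext with
        (f := fun s => R0 * ((Bi - s) * Rpower ((Bi - s) * (R0 / Nm)) (- al))).
      { intro s. unfold Pm. replace (Bi - s + (Bj - Bj)) with (Bi - s) by ring.
        replace ((Bi - s) * R0 / Nm) with ((Bi - s) * (R0 / Nm)) by (field; lra). ring. }
      apply cpt_scal. apply K_cont_comp.
      * apply Rdiv_lt_0_compat; lra.
      * apply ex_derive_cpt. auto_derive. exact I.
      * ring.
  - destruct (Rlt_dec 0 (t + bj)) as [Hp|Hn].
    + apply ex_derive_cpt. unfold Qs, Rpower. auto_derive.
      repeat split; try exact I; repeat apply Rmult_lt_0_compat; try apply Rinv_0_lt_compat; lra.
    + assert (Htb : t = 0) by lra. assert (Hbb : bj = 0) by lra. subst t bj.
      apply continuity_pt_ext with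
        (f := fun s => (R0 * lam) * (s * Rpower (s * (lam * R0 / Nf)) (- al))).
      { intro s. unfold Qs. replace (lam * (s + 0) * R0 / Nf) with (s * (lam * R0 / Nf)) by (field; lra).
        ring. }
      apply cpt_scal. apply K_cont_comp.
      * apply Rdiv_lt_0_compat; nra.
      * apply ex_derive_cpt. auto_derive. exact I.
      * reflexivity.
Qed.


Lemma MVT_open f df a b : a < b ->
  (forall c, a < c < b -> is_derive f c (df c)) ->
  (forall c, a <= c <= b -> continuity_pt f c) ->
  exists c, a < c < b /\ f b - f a = df c * (b - a).
Proof.
  intros Hab Hd Hc.
  pose (pr1 := fun c (P : a < c < b) =>
     exist (fun l => derivable_pt_abs f c l) (df c) (proj1 (is_derive_Reals f c (df c)) (Hd c P))).
  pose (pr2 := fun c (P : a < c < b) => derivable_pt_id c).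
  destruct (MVT f id a b pr1 pr2 Hab Hc) as [c [P HP]].
  { intros c _. apply derivable_continuous_pt, derivable_pt_id. }
  exists c. split; [exact P|].
  unfold pr1, pr2 in HP. simpl in HP. rewrite derive_pt_id in HP. unfold id in HP. lra.
Qed.

Lemma cont_neg f x : continuity_pt f x -> f x < 0 ->
  exists d, 0 < d /\ forall y, Rabs (y - x) < d -> f y < 0.
Proof.
  intros Hc Hf. unfold continuity_pt, continue_in, limit1_in, limit_in in Hc.
  destruct (Hc (- f x)) as [d [Hd H]]; [lra|].
  exists d. split; [exact Hd|]. intros y Hy.
  destruct (Req_dec y x) as [->|Hne]; [exact Hf|].
  specialize (H y). simpl in H. unfold R_dist in H.
  assert (Rabs (f y - f x) < - f x).
  { apply H. split; [split; [exact I|auto]|exact Hy]. }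
  apply Rabs_def2 in H0. lra.
Qed.

Lemma cont_pos f x : continuity_pt f x -> 0 < f x ->
  exists d, 0 < d /\ forall y, Rabs (y - x) < d -> 0 < f y.
Proof.
  intros Hc Hf. destruct (cont_neg (fun y => - f y) x) as [d [Hd H]].
  - apply continuity_pt_opp in Hc. exact Hc.
  - lra.
  - exists d. split; [exact Hd|]. intros y Hy. specialize (H y Hy). simpl in H. lra.
Qed.

Lemma Ep_cont Bi Bj bi bj : 0 < bi + bj -> 0 < (Bi - bi) + (Bj - bj) ->
  continuity_pt (fun s => Ep Bi Bj s bj) bi.
Proof.
  intros H1 H2. apply ex_derive_cpt. unfold Ep, rho, Pm, Qs, Rpower. auto_derive.
  assert (0 < Bi + Bj - (bi + bj)) by lra.
  repeat split; try exact I; try (apply Rgt_not_eq, exp_pos);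
  try (apply Rgt_not_eq || apply Rlt_not_eq || idtac);
  unfold Rminus in *;
  repeat apply Rmult_lt_0_compat; try apply Rinv_0_lt_compat; lra.
Qed.


Let phi' := phi.
Let Ep' := Ep.

Lemma phi_diff Bi Bj bj a b : 0 < Bi -> 0 <= bj <= Bj -> 0 <= a -> a < b -> b <= Bi ->
  exists c, a < c < b /\
    phi' Bi Bj bj b - phi' Bi Bj bj a = R0 * Pm ((Bi - c) + (Bj - bj)) * Ep' Bi Bj c bj * (b - a).
Proof.
  intros HBi Hb Ha Hab HbB.
  apply MVT_open with (df := fun c => R0 * Pm ((Bi - c) + (Bj - bj)) * Ep' Bi Bj c bj).
  - exact Hab.
  - intros c Hc. apply phi_derive; auto; lra.
  - intros c Hc. apply phi_cont; auto; lra.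
Qed.

Lemma suff_best Bi Bj lo bi bj : 0 < Bi -> 0 < Bj -> 0 <= lo -> lo <= bi <= Bi ->
  0 <= bj <= Bj -> 0 < bi + bj < Bi + Bj ->
  (lo < bi -> 0 <= Ep' Bi Bj bi bj) -> (bi < Bi -> Ep' Bi Bj bi bj <= 0) ->
  forall t, lo <= t <= Bi -> phi' Bi Bj bj t <= phi' Bi Bj bj bi.
Proof.
  intros HBi HBj Hlo Hbi Hbj Hx K1 K2 t Ht.
  destruct (Rtotal_order t bi) as [Hlt|[Heq|Hgt]].
  - destruct (phi_diff Bi Bj bj t bi) as [c [Hc Heq]]; try lra.
    assert (Hcmp : Ep' Bi Bj bi bj < Ep' Bi Bj c bj).
    { apply Ep_cmp; lra. }
    pose proof (K1 ltac:(lra)).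
    pose proof (Pm_pos (Bi - c + (Bj - bj))).
    assert (0 < R0 * Pm (Bi - c + (Bj - bj)) * Ep' Bi Bj c bj * (bi - t)).
    { apply Rmult_lt_0_compat; [|lra]. apply Rmult_lt_0_compat; [|lra]. nra. }
    lra.
  - subst; lra.
  - destruct (phi_diff Bi Bj bj bi t) as [c [Hc Heq]]; try lra.
    assert (Hcmp : Ep' Bi Bj c bj < Ep' Bi Bj bi bj).
    { apply Ep_cmp; lra. }
    pose proof (K2 ltac:(lra)).
    pose proof (Pm_pos (Bi - c + (Bj - bj))).
    assert (R0 * Pm (Bi - c + (Bj - bj)) * Ep' Bi Bj c bj * (t - bi) < 0).
    { assert (R0 * Pm (Bi - c + (Bj - bj)) * Ep' Bi Bj c bj < 0).
      { assert (0 < R0 * Pm (Bi - c + (Bj - bj))) by nra. nra. }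
      nra. }
    lra.
Qed.

Lemma nec_best Bi Bj lo bi bj : 0 < Bi -> 0 < Bj -> 0 <= lo -> lo <= bi <= Bi ->
  0 <= bj <= Bj -> 0 < bi + bj < Bi + Bj ->
  (forall t, lo <= t <= Bi -> phi' Bi Bj bj t <= phi' Bi Bj bj bi) ->
  (lo < bi -> 0 <= Ep' Bi Bj bi bj) /\ (bi < Bi -> Ep' Bi Bj bi bj <= 0).
Proof.
  intros HBi HBj Hlo Hbi Hbj Hx Hopt. split.
  - intros Hl. destruct (Rle_dec 0 (Ep' Bi Bj bi bj)) as [|Hn]; [assumption|exfalso].
    destruct (cont_neg (fun s => Ep' Bi Bj s bj) bi) as [d [Hd Hnear]].
    { apply Ep_cont; lra. }
    { simpl. lra. }
    set (t := Rmax lo (bi - d / 2)).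
    assert (Ht1 : lo <= t) by apply Rmax_l.
    assert (Ht2 : bi - d / 2 <= t) by apply Rmax_r.
    assert (Ht3 : t < bi) by (apply Rmax_lub_lt; lra).
    destruct (phi_diff Bi Bj bj t bi) as [c [Hc Heq]]; try lra.
    assert (HE : Ep' Bi Bj c bj < 0) by (apply Hnear; apply Rabs_def1; lra).
    pose proof (Pm_pos (Bi - c + (Bj - bj))).
    assert (R0 * Pm (Bi - c + (Bj - bj)) * Ep' Bi Bj c bj * (bi - t) < 0).
    { assert (R0 * Pm (Bi - c + (Bj - bj)) * Ep' Bi Bj c bj < 0).
      { assert (0 < R0 * Pm (Bi - c + (Bj - bj))) by nra. nra. }
      nra. }
    specialize (Hopt t ltac:(lra)). lra.
  - intros Hl. destruct (Rle_dec (Ep' Bi Bj bi bj) 0) as [|Hn]; [assumption|exfalso].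
    destruct (cont_pos (fun s => Ep' Bi Bj s bj) bi) as [d [Hd Hnear]].
    { apply Ep_cont; lra. }
    { simpl. lra. }
    set (t := Rmin Bi (bi + d / 2)).
    assert (Ht1 : t <= Bi) by apply Rmin_l.
    assert (Ht2 : t <= bi + d / 2) by apply Rmin_r.
    assert (Ht3 : bi < t) by (apply Rmin_glb_lt; lra).
    destruct (phi_diff Bi Bj bj bi t) as [c [Hc Heq]]; try lra.
    assert (HE : 0 < Ep' Bi Bj c bj) by (apply Hnear; apply Rabs_def1; lra).
    pose proof (Pm_pos (Bi - c + (Bj - bj))).
    assert (0 < R0 * Pm (Bi - c + (Bj - bj)) * Ep' Bi Bj c bj * (t - bi)).
    { apply Rmult_lt_0_compat; [|lra]. apply Rmult_lt_0_compat; [|lra]. nra. }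
    specialize (Hopt t ltac:(lra)). lra.
Qed.



Definition NEp B1 B2 B10 B20 b1 b2 :=
  B10 <= b1 <= B1 /\ B20 <= b2 <= B2 /\
  (forall t, B10 <= t <= B1 -> phi' B1 B2 b2 t <= phi' B1 B2 b2 b1) /\
  (forall t, B20 <= t <= B2 -> phi' B2 B1 b1 t <= phi' B2 B1 b1 b2).

Lemma NE_NEp B1 B2 B10 B20 b1 b2 : 0 <= B10 -> 0 <= B20 ->
  is_NE al Nm Nf R0 lam B1 B2 B10 B20 b1 b2 <-> NEp B1 B2 B10 B20 b1 b2.
Proof.
  intros H1 H2. unfold is_NE, NEp. split.
  - intros [Hb1 [Hb2 [Hs1 Hs2]]]. repeat split; try lra.
    + intros t Ht. specialize (Hs1 t Ht). unfold phi'.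
      rewrite !S1_phi in Hs1 by lra. exact Hs1.
    + intros t Ht. specialize (Hs2 t Ht). unfold phi'.
      rewrite !S2_phi in Hs2 by lra. exact Hs2.
  - intros [Hb1 [Hb2 [Hs1 Hs2]]]. repeat split; try lra.
    + intros t Ht. specialize (Hs1 t Ht). rewrite !S1_phi by lra. exact Hs1.
    + intros t Ht. specialize (Hs2 t Ht). rewrite !S2_phi by lra. exact Hs2.
Qed.

Lemma NEp_swap B1 B2 B10 B20 b1 b2 :
  NEp B1 B2 B10 B20 b1 b2 -> NEp B2 B1 B20 B10 b2 b1.
Proof. unfold NEp. tauto. Qed.

Definition KKT B1 B2 B10 B20 b1 b2 :=
  (B10 < b1 -> 0 <= Ep' B1 B2 b1 b2) /\ (b1 < B1 -> Ep' B1 B2 b1 b2 <= 0) /\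
  (B20 < b2 -> 0 <= Ep' B2 B1 b2 b1) /\ (b2 < B2 -> Ep' B2 B1 b2 b1 <= 0).

Lemma NEp_KKT B1 B2 B10 B20 b1 b2 : 0 < B1 -> 0 < B2 -> 0 <= B10 -> 0 <= B20 ->
  0 < b1 + b2 < B1 + B2 -> NEp B1 B2 B10 B20 b1 b2 -> KKT B1 B2 B10 B20 b1 b2.
Proof.
  intros HB1 HB2 H10 H20 Hx [Hb1 [Hb2 [Hs1 Hs2]]].
  destruct (nec_best B1 B2 B10 b1 b2) as [K1 K2]; try lra.
  { exact Hs1. }
  destruct (nec_best B2 B1 B20 b2 b1) as [K3 K4]; try lra.
  { exact Hs2. }
  unfold KKT. tauto.
Qed.

Lemma KKT_NEp B1 B2 B10 B20 b1 b2 : 0 < B1 -> 0 < B2 -> 0 <= B10 -> 0 <= B20 ->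
  B10 <= b1 <= B1 -> B20 <= b2 <= B2 ->
  0 < b1 + b2 < B1 + B2 -> KKT B1 B2 B10 B20 b1 b2 -> NEp B1 B2 B10 B20 b1 b2.
Proof.
  intros HB1 HB2 H10 H20 Hb1 Hb2 Hx [K1 [K2 [K3 K4]]].
  unfold NEp. repeat split; try lra.
  - apply (suff_best B1 B2 B10 b1 b2); auto; lra.
  - apply (suff_best B2 B1 B20 b2 b1); auto; lra.
Qed.

Lemma NEp_pos B1 B2 B10 B20 b1 b2 : 0 < B1 -> 0 < B2 -> 0 <= B10 -> 0 <= B20 ->
  NEp B1 B2 B10 B20 b1 b2 -> 0 < b1 + b2.
Proof.
  intros HB1 HB2 H10 H20 [Hb1 [Hb2 [Hs1 Hs2]]].
  destruct (Rlt_dec 0 (b1 + b2)) as [|Hn]; [assumption|exfalso].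
  assert (b1 = 0) by lra. assert (b2 = 0) by lra. subst b1 b2.
  assert (B10 = 0) by lra. subst B10.
  destruct (rho_big (B1 + B2) (/ (1 - al)) (B1 / 2))
    as [x0 [Hx0 [Hx0M [Hx0B Hrho]]]]; try lra.
  { apply Rinv_0_lt_compat; lra. }
  assert (HE : 0 < Ep' B1 B2 x0 0).
  { unfold Ep', Ep. rewrite !Rplus_0_r.
    replace (al * x0 / x0) with al by (field; lra).
    assert (Hr : 1 <= rho (B1 + B2) x0 * (1 - al)).
    { replace 1 with (/ (1 - al) * (1 - al)) at 1 by (field; lra).
      apply Rmult_le_compat_r; lra. }
    assert (0 < al * (B1 - x0) / (B1 - x0 + (B2 - 0))).
    { apply Rdiv_lt_0_compat; nra. }
    lra. }
  destruct (phi_diff B1 B2 0 0 x0) as [c [Hc Heq]]; try lra.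
  assert (Hcmp : Ep' B1 B2 x0 0 < Ep' B1 B2 c 0).
  { apply Ep_cmp; try lra. }
  pose proof (Pm_pos (B1 - c + (B2 - 0))).
  assert (0 < R0 * Pm (B1 - c + (B2 - 0)) * Ep B1 B2 c 0 * (x0 - 0)).
  { apply Rmult_lt_0_compat; [|lra]. apply Rmult_lt_0_compat; [|unfold Ep' in *; lra]. nra. }
  specialize (Hs1 x0 ltac:(lra)). unfold phi', Ep' in *. lra.
Qed.

Lemma NEp_ltB_1 B1 B2 B10 B20 b1 b2 : 0 < B1 -> 0 < B2 -> 0 <= B10 -> 0 <= B20 ->
  B10 < B1 -> NEp B1 B2 B10 B20 b1 b2 -> b1 + b2 < B1 + B2.
Proof.
  intros HB1 HB2 H10 H20 Hlt [Hb1 [Hb2 [Hs1 Hs2]]].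
  destruct (Rlt_dec (b1 + b2) (B1 + B2)) as [|Hn]; [assumption|exfalso].
  assert (b1 = B1) by lra. assert (b2 = B2) by lra. subst b1 b2.
  destruct (rho_small (B1 + B2) ((1 - al) / 2) (B1 - B10))
    as [x0 [Hx0M [Hx0B [Hx0lt Hrho]]]]; try lra.
  set (t := x0 - B2).
  assert (HE : Ep' B1 B2 t B2 < 0).
  { unfold Ep', Ep. unfold t. replace (x0 - B2 + B2) with x0 by ring.
    replace (B1 - (x0 - B2) + (B2 - B2)) with (B1 - (x0 - B2)) by ring.
    replace (al * (B1 - (x0 - B2)) / (B1 - (x0 - B2))) with al by (field; lra).
    pose proof (rho_pos (B1 + B2) x0).
    assert (0 <= al * (x0 - B2) / x0) by (apply Rdiv_le_0_compat; nra).
    assert (1 - al * (x0 - B2) / x0 <= 1) by lra.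
    assert (rho (B1 + B2) x0 * (1 - al * (x0 - B2) / x0) <= (1 - al) / 2) by nra.
    lra. }
  destruct (phi_diff B1 B2 B2 t B1) as [c [Hc Heq]];
    unfold t in *; try lra.
  assert (Hcmp : Ep' B1 B2 c B2 < Ep' B1 B2 (x0 - B2) B2).
  { apply Ep_cmp; try lra. }
  pose proof (Pm_pos (B1 - c + (B2 - B2))).
  assert (R0 * Pm (B1 - c + (B2 - B2)) * Ep B1 B2 c B2 * (B1 - (x0 - B2)) < 0).
  { assert (R0 * Pm (B1 - c + (B2 - B2)) * Ep B1 B2 c B2 < 0).
    { assert (0 < R0 * Pm (B1 - c + (B2 - B2))) by nra. unfold Ep' in *. nra. }
    nra. }
  specialize (Hs1 (x0 - B2) ltac:(lra)). unfold phi', Ep' in *. lra.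
Qed.

Lemma NEp_ltB B1 B2 B10 B20 b1 b2 : 0 < B1 -> 0 < B2 -> 0 <= B10 -> 0 <= B20 ->
  (B10 < B1 \/ B20 < B2) -> NEp B1 B2 B10 B20 b1 b2 -> b1 + b2 < B1 + B2.
Proof.
  intros HB1 HB2 H10 H20 [Hlt|Hlt2] HN.
  - exact (NEp_ltB_1 B1 B2 B10 B20 b1 b2 HB1 HB2 H10 H20 Hlt HN).
  - apply NEp_swap in HN. pose proof (NEp_ltB_1 B2 B1 B20 B10 b2 b1 HB2 HB1 H20 H10 Hlt2 HN). lra.
Qed.

Lemma KKT_uniq_aux B1 B2 B10 B20 b1 b2 c1 c2 : 0 < B1 -> 0 < B2 -> 0 <= B10 -> 0 <= B20 ->
  B10 <= b1 <= B1 -> B20 <= b2 <= B2 -> B10 <= c1 <= B1 -> B20 <= c2 <= B2 ->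
  0 < b1 + b2 -> b1 + b2 <= c1 + c2 -> c1 + c2 < B1 + B2 ->
  KKT B1 B2 B10 B20 b1 b2 -> KKT B1 B2 B10 B20 c1 c2 -> b1 = c1 /\ b2 = c2.
Proof.
  intros HB1 HB2 H10 H20 Hb1 Hb2 Hc1 Hc2 Hx Hxy Hy [K1 [K2 [K3 K4]]] [L1 [L2 [L3 L4]]].
  destruct (Rle_dec c1 b1) as [Ha|Ha]; destruct (Rle_dec c2 b2) as [Hb|Hb].
  - split; lra.
  - exfalso. assert (Hcmp : Ep' B2 B1 c2 c1 < Ep' B2 B1 b2 b1).
    { apply Ep_cmp; lra. }
    pose proof (L3 ltac:(lra)). pose proof (K4 ltac:(lra)). lra.
  - exfalso. assert (Hcmp : Ep' B1 B2 c1 c2 < Ep' B1 B2 b1 b2).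
    { apply Ep_cmp; lra. }
    pose proof (L1 ltac:(lra)). pose proof (K2 ltac:(lra)). lra.
  - exfalso.
    pose proof (Ep_sum B1 B2 b1 b2 ltac:(lra)) as S1.
    pose proof (Ep_sum B1 B2 c1 c2 ltac:(lra)) as S2.
    pose proof (L1 ltac:(lra)). pose proof (L3 ltac:(lra)).
    pose proof (K2 ltac:(lra)). pose proof (K4 ltac:(lra)).
    pose proof (rho_decr (B1 + B2) (b1 + b2) (c1 + c2)
       ltac:(lra) ltac:(lra) ltac:(lra)).
    unfold Ep' in *. nra.
Qed.

Lemma NEp_uniq B1 B2 B10 B20 b1 b2 c1 c2 : 0 < B1 -> 0 < B2 -> 0 <= B10 -> 0 <= B20 ->
  (B10 < B1 \/ B20 < B2) ->
  NEp B1 B2 B10 B20 b1 b2 -> NEp B1 B2 B10 B20 c1 c2 -> b1 = c1 /\ b2 = c2.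
Proof.
  intros HB1 HB2 H10 H20 Hor HNb HNc.
  pose proof (NEp_pos _ _ _ _ _ _ HB1 HB2 H10 H20 HNb).
  pose proof (NEp_pos _ _ _ _ _ _ HB1 HB2 H10 H20 HNc).
  pose proof (NEp_ltB _ _ _ _ _ _ HB1 HB2 H10 H20 Hor HNb).
  pose proof (NEp_ltB _ _ _ _ _ _ HB1 HB2 H10 H20 Hor HNc).
  pose proof (NEp_KKT B1 B2 B10 B20 b1 b2 HB1 HB2 H10 H20 ltac:(lra) HNb) as Kb.
  pose proof (NEp_KKT B1 B2 B10 B20 c1 c2 HB1 HB2 H10 H20 ltac:(lra) HNc) as Kc.
  destruct HNb as [Hb1 [Hb2 _]]. destruct HNc as [Hc1 [Hc2 _]].
  destruct (Rle_lt_dec (b1 + b2) (c1 + c2)).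
  - apply (KKT_uniq_aux B1 B2 B10 B20 b1 b2 c1 c2); auto; lra.
  - destruct (KKT_uniq_aux B1 B2 B10 B20 c1 c2 b1 b2); auto; lra.
Qed.

Lemma NEp_free B1 B2 B10 B20 b1 b2 : 0 < B1 -> 0 < B2 -> 0 <= B10 -> 0 <= B20 ->
  NEp B1 B2 B10 B20 b1 b2 -> xf (B1 + B2) <= b1 + b2.
Proof.
  intros HB1 HB2 H10 H20 HN.
  pose proof (xf_bounds (B1 + B2) ltac:(lra)) as Hxf.
  pose proof (NEp_pos _ _ _ _ _ _ HB1 HB2 H10 H20 HN) as Hpos.
  destruct HN as [Hb1 [Hb2 [Hs1 Hs2]]] eqn:HNe.
  destruct (Rlt_dec (b1 + b2) (B1 + B2)) as [HltB|HgeB]; [|lra].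
  pose proof (NEp_KKT B1 B2 B10 B20 b1 b2 HB1 HB2 H10 H20 ltac:(lra) HN) as [K1 [K2 [K3 K4]]].
  destruct (Rle_dec (xf (B1 + B2)) (b1 + b2)) as [|Hn]; [assumption|exfalso].
  pose proof (rho_gt1 (B1 + B2) (b1 + b2) ltac:(lra) ltac:(lra)) as Hr.
  destruct (Rlt_dec b1 B1) as [h1|h1]; destruct (Rlt_dec b2 B2) as [h2|h2].
  - pose proof (Ep_sum B1 B2 b1 b2 ltac:(lra)) as S.
    pose proof (K2 h1). pose proof (K4 h2). unfold Ep' in *. nra.
  - assert (b2 = B2) by lra. subst b2. pose proof (K2 h1) as HE.
    unfold Ep', Ep in HE.
    replace (B1 - b1 + (B2 - B2)) with (B1 - b1) in HE by ring.
    replace (al * (B1 - b1) / (B1 - b1)) with al in HE by (field; lra).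
    assert (al * b1 / (b1 + B2) <= al).
    { replace al with (al * (b1 + B2) / (b1 + B2)) at 2 by (field; lra).
      apply Rmult_le_compat_r; [left; apply Rinv_0_lt_compat; lra|]. nra. }
    nra.
  - assert (b1 = B1) by lra. subst b1. pose proof (K4 h2) as HE.
    unfold Ep', Ep in HE.
    replace (B2 - b2 + (B1 - B1)) with (B2 - b2) in HE by ring.
    replace (al * (B2 - b2) / (B2 - b2)) with al in HE by (field; lra).
    replace (B2 + B1) with (B1 + B2) in HE by ring. replace (b2 + B1) with (B1 + b2) in HE by ring.
    assert (al * b2 / (B1 + b2) <= al).
    { replace al with (al * (B1 + b2) / (B1 + b2)) at 2 by (field; lra).
      apply Rmult_le_compat_r; [left; apply Rinv_0_lt_compat; lra|]. nra. }
    nra.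
  - lra.
Qed.


Definition hh Bi B x := (rho B x - 1 + al * Bi / (B - x)) / (al * rho B x / x + al / (B - x)).
Definition Elin Bi B x b := rho B x * (1 - al * b / x) - 1 + al * (Bi - b) / (B - x).
Definition clamp lo hi v := Rmin hi (Rmax lo v).

Lemma den_pos B x : 0 < x < B -> 0 < al * rho B x / x + al / (B - x).
Proof.
  intros H. pose proof (rho_pos B x).
  assert (0 < al * rho B x / x) by (apply Rdiv_lt_0_compat; nra).
  assert (0 < al / (B - x)) by (apply Rdiv_lt_0_compat; lra). lra.
Qed.

Lemma Elin_hh Bi B x : 0 < x < B -> Elin Bi B x (hh Bi B x) = 0.
Proof.
  intros H. pose proof (den_pos B x H). unfold Elin, hh.
  pose proof (rho_pos B x). field. repeat split; try lra. assert (0 < al * rho B x * (B - x)) by (apply Rmult_lt_0_compat; nra). nra.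
Qed.

Lemma Elin_diff Bi B x b b' : 0 < x < B ->
  Elin Bi B x b - Elin Bi B x b' = (b' - b) * (al * rho B x / x + al / (B - x)).
Proof. intros H. unfold Elin. field. split; lra. Qed.

Lemma Elin_decr Bi B x b b' : 0 < x < B -> b < b' -> Elin Bi B x b' < Elin Bi B x b.
Proof.
  intros H Hb. pose proof (Elin_diff Bi B x b b' H). pose proof (den_pos B x H). nra.
Qed.

Lemma Elin_decr_le Bi B x b b' : 0 < x < B -> b <= b' -> Elin Bi B x b' <= Elin Bi B x b.
Proof.
  intros H Hb. pose proof (Elin_diff Bi B x b b' H). pose proof (den_pos B x H). nra.
Qed.

Lemma Ep_Elin1 B1 B2 b1 b2 : Ep B1 B2 b1 b2 = Elin B1 (B1 + B2) (b1 + b2) b1.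
Proof.
  unfold Ep, Elin. replace (B1 - b1 + (B2 - b2)) with (B1 + B2 - (b1 + b2)) by ring. reflexivity.
Qed.

Lemma Ep_Elin2 B1 B2 b1 b2 : Ep B2 B1 b2 b1 = Elin B2 (B1 + B2) (b1 + b2) b2.
Proof.
  unfold Ep, Elin. replace (B2 - b2 + (B1 - b1)) with (B1 + B2 - (b1 + b2)) by ring.
  replace (B2 + B1) with (B1 + B2) by ring. replace (b2 + b1) with (b1 + b2) by ring. reflexivity.
Qed.

Lemma clamp_bounds lo hi v : lo <= hi -> lo <= clamp lo hi v <= hi.
Proof. intros H. unfold clamp, Rmin, Rmax. destruct (Rle_dec lo v); destruct (Rle_dec hi _); lra. Qed.

Lemma clamp_lo lo hi v : lo <= hi -> lo < clamp lo hi v -> clamp lo hi v <= v.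
Proof. intros H. unfold clamp, Rmin, Rmax. destruct (Rle_dec lo v); destruct (Rle_dec hi _); lra. Qed.

Lemma clamp_hi lo hi v : lo <= hi -> clamp lo hi v < hi -> v <= clamp lo hi v.
Proof. intros H. unfold clamp, Rmin, Rmax. destruct (Rle_dec lo v); destruct (Rle_dec hi _); lra. Qed.

Lemma clamp_ge lo hi v : lo <= hi -> v <= hi -> v <= clamp lo hi v.
Proof. intros H. unfold clamp, Rmin, Rmax. destruct (Rle_dec lo v); destruct (Rle_dec hi _); lra. Qed.

Lemma clamp_le lo hi v : lo <= hi -> clamp lo hi v <= Rmax lo v.
Proof. intros H. unfold clamp, Rmin, Rmax. destruct (Rle_dec lo v); destruct (Rle_dec hi _); lra. Qed.

Lemma clamp_same hi v : clamp hi hi v = hi.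
Proof. unfold clamp, Rmin, Rmax. destruct (Rle_dec hi v); destruct (Rle_dec hi _); lra. Qed.

Lemma KKT_root B1 B2 B10 B20 x : 0 <= B10 <= B1 -> 0 <= B20 <= B2 -> 0 < x < B1 + B2 ->
  clamp B10 B1 (hh B1 (B1 + B2) x) + clamp B20 B2 (hh B2 (B1 + B2) x) = x ->
  KKT B1 B2 B10 B20 (clamp B10 B1 (hh B1 (B1 + B2) x)) (clamp B20 B2 (hh B2 (B1 + B2) x)).
Proof.
  intros H1 H2 Hx Hsum.
  set (b1 := clamp B10 B1 (hh B1 (B1 + B2) x)) in *.
  set (b2 := clamp B20 B2 (hh B2 (B1 + B2) x)) in *.
  unfold KKT, Ep'. rewrite Ep_Elin1, Ep_Elin2, Hsum.
  pose proof (Elin_hh B1 (B1 + B2) x Hx). pose proof (Elin_hh B2 (B1 + B2) x Hx).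
  repeat split; intros Hc.
  - pose proof (clamp_lo B10 B1 (hh B1 (B1 + B2) x) ltac:(lra) Hc).
    pose proof (Elin_decr_le B1 (B1 + B2) x b1 (hh B1 (B1 + B2) x) Hx H3). lra.
  - pose proof (clamp_hi B10 B1 (hh B1 (B1 + B2) x) ltac:(lra) Hc).
    pose proof (Elin_decr_le B1 (B1 + B2) x (hh B1 (B1 + B2) x) b1 Hx H3). lra.
  - pose proof (clamp_lo B20 B2 (hh B2 (B1 + B2) x) ltac:(lra) Hc).
    pose proof (Elin_decr_le B2 (B1 + B2) x b2 (hh B2 (B1 + B2) x) Hx H3). lra.
  - pose proof (clamp_hi B20 B2 (hh B2 (B1 + B2) x) ltac:(lra) Hc).
    pose proof (Elin_decr_le B2 (B1 + B2) x (hh B2 (B1 + B2) x) b2 Hx H3). lra.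
Qed.

Lemma rho_ex_derive B x : 0 < x < B -> ex_derive (rho B) x.
Proof.
  intros H. unfold rho, Pm, Qs, Rpower. auto_derive.
  assert (0 < B - x) by lra.
  repeat split; try exact I; try (apply Rgt_not_eq, exp_pos);
  unfold Rminus in *;
  repeat apply Rmult_lt_0_compat; try apply Rinv_0_lt_compat; lra.
Qed.

Lemma hh_cont Bi B x : 0 < x < B -> continuity_pt (hh Bi B) x.
Proof.
  intros H. apply ex_derive_cpt. unfold hh.
  pose proof (rho_pos B x). pose proof (den_pos B x H).
  auto_derive.
  - repeat split; try exact I; try (apply rho_ex_derive; exact H); try lra.
    assert (0 < al * rho B x * (B - x)) by (apply Rmult_lt_0_compat; nra).
    apply Rgt_not_eq. unfold Rminus in *. nra.
Qed.

Lemma cpt_lam_plus f g x : continuity_pt f x -> continuity_pt g x ->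
  continuity_pt (fun y => f y + g y) x.
Proof.
  intros Hf Hg. apply continuity_pt_ext with (f := plus_fct f g); [intro; reflexivity|].
  apply continuity_pt_plus; assumption.
Qed.

Lemma cpt_lam_minus f g x : continuity_pt f x -> continuity_pt g x ->
  continuity_pt (fun y => f y - g y) x.
Proof.
  intros Hf Hg. apply continuity_pt_ext with (f := minus_fct f g); [intro; reflexivity|].
  apply continuity_pt_minus; assumption.
Qed.

Lemma cpt_cst c x : continuity_pt (fun _ => c) x.
Proof. apply continuity_pt_const. intros a b; reflexivity. Qed.

Lemma cpt_abs g x : continuity_pt g x -> continuity_pt (fun y => Rabs (g y)) x.
Proof.
  intros Hg. apply continuity_pt_ext with (f := comp Rabs g); [intro; reflexivity|].
  apply continuity_pt_comp; [exact Hg|apply Rcontinuity_abs].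
Qed.

Lemma Rmax_abs a b : Rmax a b = (a + b + Rabs (a - b)) * / 2.
Proof.
  unfold Rmax. destruct (Rle_dec a b).
  - rewrite Rabs_left1 by lra. field.
  - rewrite Rabs_right by lra. field.
Qed.

Lemma Rmin_abs a b : Rmin a b = (a + b - Rabs (a - b)) * / 2.
Proof.
  unfold Rmin. destruct (Rle_dec a b).
  - rewrite Rabs_left1 by lra. field.
  - rewrite Rabs_right by lra. field.
Qed.

Lemma cpt_clamp lo hi g x : continuity_pt g x -> continuity_pt (fun y => clamp lo hi (g y)) x.
Proof.
  intros Hg.
  assert (Hm : continuity_pt (fun y => Rmax lo (g y)) x).
  { apply continuity_pt_ext with (f := fun y => / 2 * (lo + g y + Rabs (lo - g y))).
    { intro y. rewrite Rmax_abs. ring. }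
    apply cpt_scal. apply cpt_lam_plus; [apply cpt_lam_plus; [apply cpt_cst|exact Hg]|].
    apply cpt_abs. apply cpt_lam_minus; [apply cpt_cst|exact Hg]. }
  apply continuity_pt_ext with (f := fun y => / 2 * (hi + Rmax lo (g y) - Rabs (hi - Rmax lo (g y)))).
  { intro y. unfold clamp. rewrite (Rmin_abs hi). ring. }
  apply cpt_scal. apply cpt_lam_minus; [apply cpt_lam_plus; [apply cpt_cst|exact Hm]|].
  apply cpt_abs. apply cpt_lam_minus; [apply cpt_cst|exact Hm].
Qed.

Definition psi B1 B2 B10 B20 x :=
  clamp B10 B1 (hh B1 (B1 + B2) x) + clamp B20 B2 (hh B2 (B1 + B2) x) - x.

Lemma psi_cont B1 B2 B10 B20 x : 0 < x < B1 + B2 -> continuity_pt (psi B1 B2 B10 B20) x.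
Proof.
  intros H. unfold psi.
  apply cpt_lam_minus; [apply cpt_lam_plus|].
  - apply cpt_clamp. apply hh_cont; exact H.
  - apply cpt_clamp. apply hh_cont; exact H.
  - apply continuity_pt_ext with (f := id); [intro; reflexivity|]. apply derivable_continuous_pt, derivable_pt_id.
Qed.

Lemma hh_xf Bi B : 0 < B -> hh Bi B (xf B) = Bi * xf B / B.
Proof.
  intros HB. pose proof (xf_bounds B HB). unfold hh. rewrite (rho_xf B HB).
  field. repeat split; try lra.
  apply Rgt_not_eq. assert (0 < al * (B - xf B)) by nra. nra.
Qed.

Lemma psi_xf B1 B2 B10 B20 : 0 < B1 -> 0 < B2 -> B10 <= B1 -> B20 <= B2 ->
  0 <= psi B1 B2 B10 B20 (xf (B1 + B2)).
Proof.
  intros HB1 HB2 H1 H2. pose proof (xf_bounds (B1 + B2) ltac:(lra)).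
  unfold psi. rewrite !hh_xf by lra.
  set (X := xf (B1 + B2)) in *.
  set (q := X / (B1 + B2)).
  assert (Hq : 0 <= q <= 1).
  { unfold q. split; [apply Rdiv_le_0_compat; lra|].
    apply Rmult_le_reg_r with (B1 + B2); [lra|]. unfold Rdiv. rewrite Rmult_assoc, Rinv_l by lra. lra. }
  replace (B1 * X / (B1 + B2)) with (B1 * q) by (unfold q; field; lra).
  replace (B2 * X / (B1 + B2)) with (B2 * q) by (unfold q; field; lra).
  pose proof (clamp_ge B10 B1 (B1 * q) H1 ltac:(nra)).
  pose proof (clamp_ge B20 B2 (B2 * q) H2 ltac:(nra)).
  assert (B1 * q + B2 * q = X) by (unfold q; field; lra).
  lra.
Qed.

Lemma div_ge_of a b k : 0 < b -> k * b <= a -> k <= a / b.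
Proof.
  intros Hb H. apply Rmult_le_reg_r with b; [lra|]. unfold Rdiv. rewrite Rmult_assoc, Rinv_l by lra. lra.
Qed.

Lemma div_le_of a b k : 0 < b -> a <= k * b -> a / b <= k.
Proof.
  intros Hb H. apply Rmult_le_reg_r with b; [lra|]. unfold Rdiv. rewrite Rmult_assoc, Rinv_l by lra. lra.
Qed.

Lemma hh_ge Bi B c lo : 0 < c < B -> 0 <= Elin Bi B c lo -> lo <= hh Bi B c.
Proof.
  intros Hc HE. destruct (Rle_dec lo (hh Bi B c)) as [|Hn]; [assumption|exfalso].
  pose proof (Elin_decr Bi B c (hh Bi B c) lo Hc ltac:(lra)). rewrite Elin_hh in H by lra. lra.
Qed.

Lemma hh_lt Bi B c b : 0 < c < B -> Elin Bi B c b < 0 -> hh Bi B c < b.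
Proof.
  intros Hc HE. destruct (Rlt_dec (hh Bi B c) b) as [|Hn]; [assumption|exfalso].
  pose proof (Elin_decr_le Bi B c b (hh Bi B c) Hc ltac:(lra)). rewrite Elin_hh in H by lra. lra.
Qed.

Lemma psi_neg_A B1 B2 B10 B20 : 0 < B1 -> 0 < B2 -> 0 <= B10 < B1 -> 0 <= B20 < B2 ->
  exists c, xf (B1 + B2) < c < B1 + B2 /\ psi B1 B2 B10 B20 c < 0.
Proof.
  intros HB1 HB2 H1 H2.
  set (B := B1 + B2). pose proof (xf_bounds B ltac:(unfold B; lra)) as HX.
  set (X := xf B) in *.
  set (d := Rmin (Rmin ((B - X) / 2) (al * (B1 - B10) / 2)) (Rmin (al * (B2 - B20) / 2) ((1 - al) * B / 2))).
  assert (Hd1 : d <= (B - X) / 2) by (unfold d; eapply Rle_trans; [apply Rmin_l|apply Rmin_l]).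
  assert (Hd2 : d <= al * (B1 - B10) / 2) by (unfold d; eapply Rle_trans; [apply Rmin_l|apply Rmin_r]).
  assert (Hd3 : d <= al * (B2 - B20) / 2) by (unfold d; eapply Rle_trans; [apply Rmin_r|apply Rmin_l]).
  assert (Hd4 : d <= (1 - al) * B / 2) by (unfold d; eapply Rle_trans; [apply Rmin_r|apply Rmin_r]).
  assert (Hd0 : 0 < d).
  { unfold d. apply Rmin_glb_lt; apply Rmin_glb_lt; unfold B in *; nra. }
  set (c := B - d).
  assert (Hc : X < c < B) by (unfold c; lra).
  assert (Hc0 : 0 < c < B) by lra.
  assert (HcB : al * B <= c) by (unfold c; unfold B in *; nra).
  pose proof (rho_lt1 B c ltac:(unfold B; lra) Hc) as Hr.
  pose proof (rho_pos B c) as Hr0.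
  assert (Hge : forall Bi lo, 0 <= lo -> lo <= Bi -> Bi <= B -> d <= al * (Bi - lo) / 2 ->
            lo <= hh Bi B c).
  { intros Bi lo Hlo HloB HBi Hdd. apply hh_ge; [exact Hc0|]. unfold Elin.
    assert (al * lo / c <= 1) by (apply div_le_of; nra).
    assert (1 <= al * (Bi - lo) / (B - c)).
    { apply div_ge_of; unfold c; [lra|]. lra. }
    assert (0 <= rho B c * (1 - al * lo / c)) by nra.
    lra. }
  pose proof (Hge B1 B10 ltac:(lra) ltac:(lra) ltac:(unfold B; lra) Hd2) as G1.
  pose proof (Hge B2 B20 ltac:(lra) ltac:(lra) ltac:(unfold B; lra) Hd3) as G2.
  exists c. split; [exact Hc|].
  unfold psi. fold B.
  pose proof (clamp_le B10 B1 (hh B1 B c) ltac:(lra)).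
  pose proof (clamp_le B20 B2 (hh B2 B c) ltac:(lra)).
  rewrite Rmax_right in H by lra. rewrite Rmax_right in H0 by lra.
  set (h1 := hh B1 B c) in *. set (h2 := hh B2 B c) in *.
  assert (Hsum : Elin B1 B c h1 + Elin B2 B c h2 =
           rho B c * (2 - al * (h1 + h2) / c) - 2 + al * (B - (h1 + h2)) / (B - c)).
  { unfold Elin, B. field. split; unfold B in *; lra. }
  rewrite !Elin_hh in Hsum by lra.
  destruct (Rlt_dec (h1 + h2) c) as [Hlt|Hn]; [lra|exfalso].
  assert (al <= al * (h1 + h2) / c) by (apply div_ge_of; nra).
  assert (al * (B - (h1 + h2)) / (B - c) <= al) by (apply div_le_of; nra).
  nra.
Qed.

Lemma psi_neg_B B1 B2 B20 : 0 < B1 -> 0 < B2 -> 0 <= B20 < B2 ->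
  exists c, xf (B1 + B2) < c < B1 + B2 /\ psi B1 B2 B1 B20 c < 0.
Proof.
  intros HB1 HB2 H2.
  set (B := B1 + B2). pose proof (xf_bounds B ltac:(unfold B; lra)) as HX.
  destruct (rho_small B ((1 - al) / 2) ((B2 - B20) / 2)) as [c [Hc1 [Hc2 [Hc3 Hr]]]];
    try (unfold B; lra).
  assert (Hcx : xf B < c).
  { destruct (Rlt_dec (xf B) c) as [|Hn]; [assumption|exfalso].
    destruct (Req_dec c (xf B)) as [He|Hne].
    - rewrite He, rho_xf in Hr by (unfold B; lra). lra.
    - pose proof (rho_gt1 B c ltac:(unfold B; lra) ltac:(unfold B in *; lra)). lra. }
  assert (Hc0 : 0 < c < B) by lra.
  pose proof (rho_pos B c) as Hr0.
  set (b := c - B1).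
  assert (Hb : B20 < b) by (unfold b, B in *; lra).
  assert (HE : Elin B2 B c b < 0).
  { unfold Elin. replace (B2 - b) with (B - c) by (unfold b, B; ring).
    replace (al * (B - c) / (B - c)) with al by (field; lra).
    assert (0 <= al * b / c) by (apply Rdiv_le_0_compat; nra).
    assert (rho B c * (1 - al * b / c) <= rho B c) by nra.
    lra. }
  pose proof (hh_lt B2 B c b Hc0 HE) as Hh.
  exists c. split; [lra|].
  unfold psi. fold B. rewrite clamp_same.
  pose proof (clamp_le B20 B2 (hh B2 B c) ltac:(lra)).
  assert (Rmax B20 (hh B2 B c) < b) by (apply Rmax_lub_lt; lra).
  unfold b in *. lra.
Qed.

Lemma exist_F1 B1 B2 B10 B20 : 0 < B1 -> 0 < B2 -> 0 <= B10 <= B1 -> 0 <= B20 < B2 ->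
  exists b1 b2, NEp B1 B2 B10 B20 b1 b2.
Proof.
  intros HB1 HB2 H1 H2.
  pose proof (xf_bounds (B1 + B2) ltac:(lra)) as HX.
  assert (Hc : exists c, xf (B1 + B2) < c < B1 + B2 /\ psi B1 B2 B10 B20 c < 0).
  { destruct (Rle_lt_or_eq_dec _ _ (proj2 H1)) as [Hlt|Heq].
    - apply psi_neg_A; lra.
    - subst B10. apply psi_neg_B; lra. }
  destruct Hc as [c [Hc Hpc]].
  assert (Hx : exists x, xf (B1 + B2) <= x <= c /\ psi B1 B2 B10 B20 x = 0).
  { pose proof (psi_xf B1 B2 B10 B20 HB1 HB2 ltac:(lra) ltac:(lra)) as H0.
    destruct (Rle_lt_or_eq_dec _ _ H0) as [Hlt|Heq].
    - destruct (Ranalysis5.IVT_interv (fun x => - psi B1 B2 B10 B20 x) (xf (B1 + B2)) c) as [z [Hz Hfz]].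
      + intros a Ha. apply continuity_pt_opp. apply psi_cont. lra.
      + lra.
      + lra.
      + lra.
      + exists z. split; [exact Hz|lra].
    - exists (xf (B1 + B2)). split; [lra|auto]. }
  destruct Hx as [x [Hx Hpx]].
  unfold psi in Hpx.
  exists (clamp B10 B1 (hh B1 (B1 + B2) x)), (clamp B20 B2 (hh B2 (B1 + B2) x)).
  pose proof (clamp_bounds B10 B1 (hh B1 (B1 + B2) x) ltac:(lra)).
  pose proof (clamp_bounds B20 B2 (hh B2 (B1 + B2) x) ltac:(lra)).
  apply KKT_NEp; try lra.
  apply KKT_root; lra.
Qed.

Lemma exist_NE B1 B2 B10 B20 : 0 < B1 -> 0 < B2 -> 0 <= B10 <= B1 -> 0 <= B20 <= B2 ->
  exists b1 b2, NEp B1 B2 B10 B20 b1 b2.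
Proof.
  intros HB1 HB2 H1 H2.
  destruct (Rle_lt_or_eq_dec _ _ (proj2 H2)) as [Hlt|Heq].
  - apply exist_F1; lra.
  - destruct (Rle_lt_or_eq_dec _ _ (proj2 H1)) as [Hlt1|Heq1].
    + destruct (exist_F1 B2 B1 B20 B10) as [b2 [b1 Hb]]; try lra.
      exists b1, b2. apply NEp_swap. exact Hb.
    + subst. exists B1, B2. unfold NEp. repeat split; try lra.
      * intros t Ht. replace t with B1 by lra. lra.
      * intros t Ht. replace t with B2 by lra. lra.
Qed.

Lemma main_thm B1 B2 B10 B20 : 0 < B1 -> 0 < B2 -> 0 <= B10 <= B1 -> 0 <= B20 <= B2 ->
  exists b1 b2,
    is_NE al Nm Nf R0 lam B1 B2 B10 B20 b1 b2 /\
    (forall c1 c2, is_NE al Nm Nf R0 lam B1 B2 B10 B20 c1 c2 -> c1 = b1 /\ c2 = b2) /\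
    Bfree al Nm Nf lam B1 + Bfree al Nm Nf lam B2 <= b1 + b2 /\
    Bfree al Nm Nf lam B1 + Bfree al Nm Nf lam B2 =
      eps al lam * Nf * (B1 + B2) / (eps al lam * Nf + Nm).
Proof.
  intros HB1 HB2 H1 H2.
  pose proof eps_pos as He.
  assert (Hfree : Bfree al Nm Nf lam B1 + Bfree al Nm Nf lam B2 = xf (B1 + B2)).
  { unfold Bfree, xf. field. nra. }
  destruct (exist_NE B1 B2 B10 B20 HB1 HB2 H1 H2) as [b1 [b2 Hb]].
  exists b1, b2. split; [|split; [|split]].
  - apply NE_NEp; try lra. exact Hb.
  - intros c1 c2 Hc. apply NE_NEp in Hc; try lra.
    destruct (Rle_lt_or_eq_dec _ _ (proj2 H1)) as [Hlt1|Heq1].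
    + destruct (NEp_uniq B1 B2 B10 B20 c1 c2 b1 b2); auto; lra.
    + destruct (Rle_lt_or_eq_dec _ _ (proj2 H2)) as [Hlt2|Heq2].
      * destruct (NEp_uniq B1 B2 B10 B20 c1 c2 b1 b2); auto; lra.
      * destruct Hb as [Hb1 [Hb2 _]]. destruct Hc as [Hc1 [Hc2 _]]. split; lra.
  - rewrite Hfree. apply (NEp_free B1 B2 B10 B20); auto; lra.
  - rewrite Hfree. unfold xf. reflexivity.
Qed.

End Game.

Theorem theorem2 (alpha Nm Nf R0 lamS B1 B2 B10 B20 : R) :
  0 < alpha < 1 -> 0 < Nm -> 0 < Nf -> 0 < R0 -> 1 < lamS ->
  0 < B1 -> 0 < B2 -> 0 <= B10 <= B1 -> 0 <= B20 <= B2 ->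
  exists b1 b2,
    is_NE alpha Nm Nf R0 lamS B1 B2 B10 B20 b1 b2 /\
    (forall c1 c2, is_NE alpha Nm Nf R0 lamS B1 B2 B10 B20 c1 c2 ->
       c1 = b1 /\ c2 = b2) /\
    Bfree alpha Nm Nf lamS B1 + Bfree alpha Nm Nf lamS B2 <= b1 + b2 /\
    Bfree alpha Nm Nf lamS B1 + Bfree alpha Nm Nf lamS B2 =
      eps alpha lamS * Nf * (B1 + B2) / (eps alpha lamS * Nf + Nm).
Proof.
  intros. apply main_thm; assumption.
Qed.
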